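(* Let $T$ be a complete theory with monster model $\mathbb{M}$, $S\subseteq\mathbb{M}$ a small set, and $(a_i:i\in\mathbb{Q})$ an $S$-indiscernible sequence of (finite or small infinite) tuples. Let $I,J\subseteq\mathbb{Q}$ be finite with $I\cap J=\emptyset$, $I=\{i_1,\ldots,i_n\}$ with $i_1<\cdots<i_n$. For each $t\in[n]$ let $i'_t\in\mathbb{Q}$ be such that $i_t<i'_t$ and $$\operatorname{qftp}_<(i'_t/J\cup\{i_s:s\in[n]\setminus\{t\}\})=\operatorname{qftp}_<(i_t/J\cup\{i_s:s\in[n]\setminus\{t\}\}).$$ Then $\operatorname{dist}_{S\cup(a_i)_{i\in J}}\big((a_{i_1},\ldots,a_{i_n}),(a_{i'_1},\ldots,a_{i'_n})\big)\le1$.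
   Context: A symmetric formula $\theta(x,y)$ with parameters ($x,y$ of the same sorts) is thick if there is no sequence $(c_i)_{i\in\omega}$ with $\models\neg\theta(c_i,c_j)$ for all $i<j$. $\Theta_S(x,y)$ is the set of all thick formulas with parameters from $S$ in finite subtuples of corresponding variables of $x,y$. The Lascar distance $\operatorname{dist}_S(a,b)$ is the least $n\in\omega$ such that there are $a_0=a,a_1,\ldots,a_n=b$ with $\models\Theta_S(a_i,a_{i+1})$ for all $i<n$ (or $\infty$ if none exists). $\operatorname{qftp}_<$ denotes quantifier-free type in the order of $\mathbb{Q}$; $[n]=\{1,\ldots,n\}$. *)

(* Defs.v *)
From mathcomp Require Import all_boot all_order all_algebra.
From Stdlib Require Lists.List.
Set Implicit Arguments. Unset Strict Implicit. Unset Printing Implicit Defensive.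
Import Order.TTheory GRing.Theory Num.Theory.

Record signature := Signature {
  fsym : Type; rsym : Type;
  farity : fsym -> nat; rarity : rsym -> nat }.
Arguments farity : clear implicits. Arguments rarity : clear implicits.

Inductive term (L : signature) (V : Type) : Type :=
| tvar : V -> term L V
| tapp : forall f : fsym L, ('I_(farity L f) -> term L V) -> term L V.

(* formulas with free variables in V (quantifiers bind via option) *)
Inductive formula (L : signature) : Type -> Type :=
| frel : forall V (r : rsym L), ('I_(rarity L r) -> term L V) -> formula L V
| feq : forall V, term L V -> term L V -> formula L V
| fneg : forall V, formula L V -> formula L V
| fand : forall V, formula L V -> formula L V -> formula L V
| fex : forall V, formula L (option V) -> formula L V.

Record structure (L : signature) := Structure {
  carrier :> Type;
  finterp : forall f : fsym L, ('I_(farity L f) -> carrier) -> carrier;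
  rinterp : forall r : rsym L, ('I_(rarity L r) -> carrier) -> Prop }.
Arguments finterp : clear implicits. Arguments rinterp : clear implicits.

Fixpoint teval (L : signature) (M : structure L) (V : Type) (e : V -> M)
  (t : term L V) : M :=
  match t with
  | tvar v => e v
  | tapp f args => finterp L M f (fun k => teval e (args k))
  end.

Fixpoint sat (L : signature) (M : structure L) (V : Type) (phi : formula L V)
  : (V -> M) -> Prop :=
  match phi in formula _ V0 return (V0 -> M) -> Prop with
  | frel _ r args => fun e => rinterp L M r (fun k => teval e (args k))
  | feq _ t1 t2 => fun e => teval e t1 = teval e t2
  | fneg _ psi => fun e => ~ sat psi e
  | fand _ p q => fun e => sat p e /\ sat q e
  | fex _ psi => fun e => exists m : M,
      sat psi (fun o => match o with Some v => e v | None => m end)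
  end.

Definition pformula (L : signature) (M : structure L) (A : M -> Prop) (V : Type) :=
  formula L (V + {m : M | A m}).

Definition penv (L : signature) (M : structure L) (A : M -> Prop) (V : Type)
  (e : V -> M) : V + {m : M | A m} -> M :=
  fun z => match z with inl v => e v | inr p => sval p end.

Definition psat (L : signature) (M : structure L) (A : M -> Prop) (V : Type)
  (phi : pformula A V) (e : V -> M) : Prop := sat phi (penv e).

(* kappa is represented by a type K; a type is small if |Y| < |K|,
   i.e. K does not inject into Y. *)
Definition smallT (K Y : Type) : Prop := ~ exists f : K -> Y, injective f.
Definition small (K : Type) (M : Type) (A : M -> Prop) : Prop :=
  smallT K {m : M | A m}.

Definition automorphism (L : signature) (M : structure L) (s : M -> M) : Prop :=
  bijective s /\
  (forall f args, s (finterp L M f args) = finterp L M f (fun k => s (args k))) /\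
  (forall r args, rinterp L M r args <-> rinterp L M r (fun k => s (args k))).

Definition saturated (L : signature) (K : Type) (M : structure L) : Prop :=
  forall A : M -> Prop, small K A ->
  forall p : pformula A unit -> Prop,
    (forall l : seq (pformula A unit), (forall phi, Stdlib.Lists.List.In phi l -> p phi) ->
       exists m : M, forall phi, Stdlib.Lists.List.In phi l -> psat phi (fun _ => m)) ->
    exists m : M, forall phi, p phi -> psat phi (fun _ => m).

Definition strongly_homogeneous (L : signature) (K : Type) (M : structure L) : Prop :=
  forall A : M -> Prop, small K A ->
  forall f : {m : M | A m} -> M,
    (forall phi : formula L {m : M | A m}, sat phi (@sval _ _) <-> sat phi f) ->
    exists s : M -> M, automorphism s /\ forall x, s (sval x) = f x.

(* M is a monster model (kappa-saturated, strongly kappa-homogeneous,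
   kappa > |L| + aleph_0) of its complete theory T = Th(M). *)
Definition monster (L : signature) (K : Type) (M : structure L) : Prop :=
  smallT K ((fsym L + rsym L) + nat) /\ saturated K M /\ strongly_homogeneous K M.

Definition increasing (k : nat) (i : 'I_k -> rat) : Prop :=
  forall s t : 'I_k, (s < t)%N -> (i s < i t)%R.

Definition indiscernible (L : signature) (M : structure L) (S : M -> Prop)
  (X : Type) (a : rat -> X -> M) : Prop :=
  forall (k : nat) (i j : 'I_k -> rat), increasing i -> increasing j ->
  forall phi : pformula S ('I_k * X),
    psat phi (fun p => a (i p.1) p.2) <-> psat phi (fun p => a (j p.1) p.2).

Definition pair_env (M : Type) (X : Type) (x y : X -> M) : X + X -> M :=
  fun z => match z with inl u => x u | inr u => y u end.

Definition symmetric_f (L : signature) (M : structure L) (A : M -> Prop) (X : Type)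
  (th : pformula A (X + X)) : Prop :=
  forall x y : X -> M, psat th (pair_env x y) <-> psat th (pair_env y x).

Definition thick (L : signature) (M : structure L) (A : M -> Prop) (X : Type)
  (th : pformula A (X + X)) : Prop :=
  ~ exists c : nat -> X -> M,
      forall i j : nat, (i < j)%N -> ~ psat th (pair_env (c i) (c j)).

Definition Theta (L : signature) (M : structure L) (A : M -> Prop) (X : Type)
  (x y : X -> M) : Prop :=
  forall th : pformula A (X + X), symmetric_f th -> thick th ->
    psat th (pair_env x y).

Definition lascar_dist_le (L : signature) (M : structure L) (A : M -> Prop)
  (X : Type) (x y : X -> M) (n : nat) : Prop :=
  exists m : nat, (m <= n)%N /\
    exists c : nat -> X -> M, c 0%N = x /\ c m = y /\
      forall i : nat, (i < m)%N -> Theta A (c i) (c i.+1).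

Definition qftp_eq (B : rat -> Prop) (x y : rat) : Prop :=
  forall j, B j ->
    ((x < j)%R <-> (y < j)%R) /\ ((j < x)%R <-> (j < y)%R) /\ (x = j <-> y = j).

(* Main.v *)
Require Import Defs.
From mathcomp Require Import all_boot all_order all_algebra.
From Stdlib Require Import FunctionalExtensionality ClassicalEpsilon Classical.
From mathcomp Require Import lra.
Set Implicit Arguments. Unset Strict Implicit. Unset Printing Implicit Defensive.
Import Order.TTheory GRing.Theory Num.Theory.
Fixpoint trm_ren (L : signature) (V W : Type) (f : V -> W) (t : term L V) : term L W :=
  match t with
  | tvar v => tvar L (f v)
  | tapp g args => @tapp L W g (fun k => trm_ren f (args k))
  end.

Fixpoint fren (L : signature) (V : Type) (phi : formula L V) : forall W, (V -> W) -> formula L W :=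
  match phi in formula _ V0 return forall W, (V0 -> W) -> formula L W with
  | Defs.frel _ r args => fun W f => @Defs.frel L W r (fun k => trm_ren f (args k))
  | feq _ t1 t2 => fun W f => feq (trm_ren f t1) (trm_ren f t2)
  | fneg _ p => fun W f => fneg (fren p f)
  | fand _ p q => fun W f => fand (fren p f) (fren q f)
  | fex _ p => fun W f => fex (fren p (option_map f))
  end.

Lemma teval_ren (L : signature) (M : structure L) (V W : Type) (f : V -> W)
  (e : V -> M) (e' : W -> M) : (forall v, e' (f v) = e v) ->
  forall t, teval e' (trm_ren f t) = teval e t.
Proof.
move=> He; elim=> [v|g args IH] /=; first exact: He.
congr (finterp _ _ _ _); apply: functional_extensionality => k; exact: IH.
Qed.

Lemma sat_ren (L : signature) (M : structure L) (V : Type) (phi : formula L V) :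
  forall W (f : V -> W) (e : V -> M) (e' : W -> M), (forall v, e' (f v) = e v) ->
  (sat (fren phi f) e' <-> sat phi e).
Proof.
elim: phi => {V} [V r args|V t1 t2|V p IH|V p IHp q IHq|V p IH] W f e e' He /=.
- have -> : (fun k => teval e' (trm_ren f (args k))) = (fun k => teval e (args k)).
    by apply: functional_extensionality => k; exact: teval_ren.
  by [].
- by rewrite !(teval_ren He).
- by rewrite (IH _ _ _ _ He).
- by rewrite (IHp _ _ _ _ He) (IHq _ _ _ _ He).
- split=> -[m Hm]; exists m; move: Hm; [apply: (proj1 (IH _ _ _ _ _)) | apply: (proj2 (IH _ _ _ _ _))]; by case.
Qed.

Local Open Scope ring_scope.

Lemma inc_inj (n : nat) (I : 'I_n -> rat) : increasing I -> injective I.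
Proof.
move=> HI s t E; case: (ltngtP s t) => [h|h|/val_inj //].
- by have := HI _ _ h; rewrite E ltxx.
- by have := HI _ _ h; rewrite E ltxx.
Qed.

Definition uu (m : nat) : rat := 1 - ((m.+1)%:R)^-1.

Lemma uu_ge0 m : 0 <= uu m.
Proof. rewrite /uu subr_ge0 invf_le1 ?ltr0Sn // ler1n //. Qed.

Lemma uu_lt1 m : uu m < 1.
Proof. rewrite /uu ltrBlDr ltrDl invr_gt0 ltr0Sn //. Qed.

Lemma uu_mono k l : (k < l)%N -> uu k < uu l.
Proof.
move=> h; rewrite /uu ltrD2l ltrN2 ltf_pV2 ?posrE ?ltr0Sn // ltr_nat ltnS //.
Qed.

Lemma sum_abs_ge (F : seq rat) r : r \in F -> r <= \sum_(x <- F) `|x|.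
Proof.
elim: F => [//|y F IH]; rewrite inE big_cons => /orP [/eqP ->|/IH h].
- rewrite -[X in X <= _]addr0; apply: lerD; first exact: ler_norm.
  by apply: sumr_ge0 => i _.
- rewrite -[X in X <= _]add0r; apply: lerD => //.
Qed.

Definition hfun (n : nat) (I I' qk ql : 'I_n -> rat) (r : rat) : rat :=
  if [pick t | I t == r] is Some t then qk t
  else if [pick t | I' t == r] is Some t then ql t else r.

Definition qcond (n : nat) (I I' : 'I_n -> rat) (J : seq rat) :=
  forall t : 'I_n,
     qftp_eq (fun j => j \in J \/ exists s : 'I_n, s != t /\ j = I s) (I' t) (I t).

Lemma F1 n (I I' : 'I_n -> rat) J : increasing I -> qcond I I' J ->
  forall t u : 'I_n, (t < u)%N -> I' t < I u.
Proof.
move=> HI Hq t u h.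
have neq : u != t by apply/eqP => E; move: h; rewrite E ltnn.
have [H1 _] := Hq t (I u) (or_intror (ex_intro _ u (conj neq erefl))).
by apply/H1/HI.
Qed.

Lemma F2 n (I I' : 'I_n -> rat) J : increasing I -> (forall t, I t < I' t) ->
  qcond I I' J -> forall t u, I t != I' u.
Proof.
move=> HI HI' Hq t u; apply/eqP => E.
case: (ltngtP t u) => [h|h|/val_inj E'].
- have := HI' u; have := HI _ _ h; rewrite E. lra.
- have := F1 HI Hq h; rewrite E. lra.
- by have := HI' t; rewrite E E' ltxx.
Qed.

Lemma F3 n (I I' : 'I_n -> rat) J : increasing I -> (forall t, I t < I' t) ->
  qcond I I' J -> injective I'.
Proof.
move=> HI HI' Hq t u E.
case: (ltngtP t u) => [h|h|/val_inj //].
- exfalso; have := F1 HI Hq h; have := HI' u; rewrite E. lra.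
- exfalso; have := F1 HI Hq h; have := HI' t; rewrite E. lra.
Qed.

Lemma F4 n (I I' : 'I_n -> rat) J : (forall t, I t \notin J) ->
  qcond I I' J -> forall r, r \in J -> forall t, r < I t \/ I' t < r.
Proof.
move=> HIJ Hq r Hr t.
have [H1 _] := Hq t r (or_introl Hr).
have Hne : I t != r by apply/eqP => E; move: (HIJ t); rewrite E Hr.
case: (ltgtP r (I t)) => [h|h|E]; [by left|right; exact/H1|by move: Hne; rewrite E eqxx].
Qed.

Definition outside n (I I' : 'I_n -> rat) (r : rat) := forall t, r < I t \/ I' t < r.

Lemma hI n (I I' qk ql : 'I_n -> rat) : injective I -> forall t, hfun I I' qk ql (I t) = qk t.
Proof.
move=> Iinj t; rewrite /hfun; case: pickP => [t' /eqP /Iinj -> //|/(_ t)].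
by rewrite eqxx.
Qed.

Lemma hI' n (I I' qk ql : 'I_n -> rat) : injective I' -> (forall t u, I t != I' u) ->
  forall t, hfun I I' qk ql (I' t) = ql t.
Proof.
move=> I'inj Hne t; rewrite /hfun; case: pickP => [t' /eqP E|_].
  by move: (Hne t' t); rewrite E eqxx.
case: pickP => [t' /eqP /I'inj -> //|/(_ t)]; by rewrite eqxx.
Qed.

Lemma hout n (I I' qk ql : 'I_n -> rat) : (forall t, I t < I' t) ->
  forall r, outside I I' r -> hfun I I' qk ql r = r.
Proof.
move=> HI' r Ho; rewrite /hfun; case: pickP => [t /eqP E|_].
  by have := Ho t; have := HI' t; rewrite E; lra.
case: pickP => [t /eqP E|//].
by have := Ho t; have := HI' t; rewrite E; lra.
Qed.

Lemma hmono n (I I' qk ql : 'I_n -> rat) J : increasing I -> (forall t, I t < I' t) ->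
  qcond I I' J ->
  (forall t, I t <= qk t) -> (forall t, qk t < ql t) -> (forall t, ql t < I' t) ->
  forall r r', (outside I I' r \/ exists t, r = I t \/ r = I' t) ->
  (outside I I' r' \/ exists t, r' = I t \/ r' = I' t) -> r < r' ->
  hfun I I' qk ql r < hfun I I' qk ql r'.
Proof.
move=> HI HI' Hq H1 H2 H3.
have Iinj := inc_inj HI. have I'inj := F3 HI HI' Hq. have Hne := F2 HI HI' Hq.
have hv : forall t r, r = I t \/ r = I' t ->
    I t <= hfun I I' qk ql r < I' t /\ I t <= r <= I' t.
  move=> t r [->|->]; rewrite ?(@hI _ _ I' qk ql Iinj) ?(@hI' _ _ _ qk ql I'inj Hne) //;
  have := H1 t; have := H2 t; have := H3 t; have := HI' t; move=> *;
  split; apply/andP; split; lra.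
move=> r r' [Ho|[t Ht]] [Ho'|[u Hu]] Hlt.
- by rewrite (@hout _ _ _ qk ql HI' _ Ho) (@hout _ _ _ qk ql HI' _ Ho').
- rewrite (@hout _ _ _ qk ql HI' _ Ho); have [/andP[a1 a2] /andP[a3 a4]] := hv _ _ Hu.
  by have := Ho u; lra.
- rewrite (@hout _ _ _ qk ql HI' _ Ho'); have [/andP[a1 a2] /andP[a3 a4]] := hv _ _ Ht.
  by have := Ho' t; lra.
- have [/andP[a1 a2] /andP[a3 a4]] := hv _ _ Ht.
  have [/andP[b1 b2] /andP[b3 b4]] := hv _ _ Hu.
  case: (ltngtP t u) => [h|h|/val_inj E].
  + by have := F1 HI Hq h; lra.
  + by have := F1 HI Hq h; lra.
  + subst u; case: Ht => E1; case: Hu => E2; subst r r'; rewrite ?(@hI _ _ I' qk ql Iinj) ?(@hI' _ _ _ qk ql I'inj Hne) //; try lra.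
    all: try (by have := H2 t; lra). all: try (by have := HI' t; lra).
Qed.

Theorem lemma5p20 (L : signature) (K : Type) (M : structure L)
  (HM : monster K M)
  (S : M -> Prop) (HS : small K S)
  (X : Type) (HX : smallT K X)
  (a : rat -> X -> M) (Ha : indiscernible S a)
  (n : nat) (I : 'I_n -> rat) (HI : increasing I)
  (J : seq rat) (HIJ : forall t : 'I_n, I t \notin J)
  (I' : 'I_n -> rat) (HI' : forall t : 'I_n, (I t < I' t)%R)
  (Hq : forall t : 'I_n,
     qftp_eq (fun j => j \in J \/ exists s : 'I_n, s != t /\ j = I s) (I' t) (I t)) :
  lascar_dist_le
    (fun m : M => S m \/ exists (j : rat) (x : X), j \in J /\ a j x = m)
    (fun p : 'I_n * X => a (I p.1) p.2)
    (fun p : 'I_n * X => a (I' p.1) p.2) 1.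
Proof.
set A := (fun m : M => _).
have Hq' : qcond I I' J by exact: Hq.
have Iinj := inc_inj HI. have I'inj := F3 HI HI' Hq'. have Hne := F2 HI HI' Hq'.
have HJo := F4 HIJ Hq'.
exists 1%N; split => //.
exists (fun i => if i is 0%N then (fun p : 'I_n * X => a (I p.1) p.2)
                 else (fun p : 'I_n * X => a (I' p.1) p.2)).
split => //; split => //.
move=> i; rewrite ltnS leqn0 => /eqP -> /=.
move=> th _ Hthick.
apply: NNPP => Hn; apply: Hthick.
set F := J ++ [seq I t | t <- enum 'I_n] ++ [seq I' t | t <- enum 'I_n].
set s := sort <=%O (undup F).
set dm := \sum_(r <- F) `|r| + 1.
have Hdm : forall r, r \in F -> r < dm.
  by move=> r /sum_abs_ge h; rewrite /dm; lra.
have Hs : sorted <%O s by rewrite sort_lt_sorted undup_uniq.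
have memsF : forall r, (r \in s) = (r \in F) by move=> r; rewrite mem_sort mem_undup.
have FI : forall t, I t \in F.
  by move=> t; rewrite !mem_cat map_f ?orbT // mem_enum.
have FI' : forall t, I' t \in F.
  by move=> t; rewrite !mem_cat [X in _ || (_ || X)]map_f ?orbT // mem_enum.
have FJ : forall r, r \in J -> r \in F by move=> r Hr; rewrite mem_cat Hr.
pose idx (r : rat) : 'I_(size s).+1 := inord (index r s).
pose ii (m : 'I_(size s).+1) := nth dm s m.
have Hii : forall r, r \in F -> ii (idx r) = r.
  move=> r Hr; rewrite /ii /idx inordK; first by rewrite nth_index ?memsF.
  by rewrite ltnS ltnW // index_mem memsF.
have Hch : forall p : {m : M | A m}, {z : ('I_(size s).+1 * X) + {m | S m} |
    match z with
    | inl (m, x) => exists j, j \in J /\ m = idx j /\ a j x = sval p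
    | inr q => sval q = sval p end}.
  move=> [m Hm]; apply: constructive_indefinite_description.
  case: Hm => [Hm|[j [x [Hj E]]]].
  - by exists (inr (exist _ m Hm)).
  - by exists (inl (idx j, x)); exists j.
pose tr (v : (('I_n * X) + ('I_n * X)) + {m | A m}) :
    ('I_(size s).+1 * X) + {m | S m} :=
  match v with
  | inl (inl (t, x)) => inl (idx (I t), x)
  | inl (inr (t, x)) => inl (idx (I' t), x)
  | inr p => sval (Hch p) end.
pose phi : pformula S ('I_(size s).+1 * X) := fren th tr.
have Key : forall h : rat -> rat, (forall r, r \in J -> h r = r) ->
   (psat th (pair_env (fun p : 'I_n * X => a (h (I p.1)) p.2)
                      (fun p : 'I_n * X => a (h (I' p.1)) p.2)) <->
    psat phi (fun p => a (h (ii p.1)) p.2)).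
  move=> h Hh; rewrite /psat /phi; symmetry; apply: sat_ren.
  case=> [[[t x]|[t x]]|p] /=.
  - by rewrite Hii.
  - by rewrite Hii.
  - case: (Hch p) => [[[m x]|q]] /= Hz; last exact: Hz.
    by case: Hz => j [Hj [-> E]]; rewrite Hii ?FJ // Hh.
have Hout_dm : outside I I' dm.
  by move=> t; right; apply: Hdm.
have kind : forall m, outside I I' (ii m) \/ exists t, ii m = I t \/ ii m = I' t.
  move=> m; rewrite /ii.
  case: (ltnP m (size s)) => hm; last by rewrite nth_default //; left.
  have : nth dm s m \in F by rewrite -memsF mem_nth.
  rewrite !mem_cat => /orP [Hj|/orP [/mapP [t _ ->]|/mapP [t _ ->]]].
  - by left; apply: HJo.
  - by right; exists t; left.
  - by right; exists t; right.
have Hinc : increasing ii.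
  move=> m m' hmm'; rewrite /ii.
  case: (ltnP m' (size s)) => hm'.
  - by rewrite lt_sorted_ltn_nth // inE (ltn_trans hmm').
  - rewrite [X in _ < X]nth_default //; apply: Hdm; rewrite -memsF mem_nth //.
    by have := ltn_ord m'; rewrite ltnS; apply: leq_trans hmm'.
pose q (m : nat) (t : 'I_n) := I t + (I' t - I t) * uu m.
exists (fun m (p : 'I_n * X) => a (q m p.1) p.2).
move=> k l hkl.
pose h := hfun I I' (q k) (q l).
have hJ : forall r, r \in J -> h r = r.
  by move=> r Hr; apply: hout => //; apply: HJo.
have Hinc2 : increasing (fun m => h (ii m)).
  move=> m m' hmm'; apply: (hmono HI HI' Hq') => //.
  - move=> t; rewrite /q; have := uu_ge0 k; have := HI' t; nra.
  - move=> t; rewrite /q; have := uu_mono hkl; have := HI' t; nra.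
  - move=> t; rewrite /q; have := uu_lt1 l; have := HI' t; nra.
  - exact: Hinc.
have E1 := Key h hJ.
have E0 := Key id (fun _ _ => erefl).
have E2 := Ha _ _ _ Hinc Hinc2 phi.
move=> HH; apply: Hn.
apply/E0/E2/E1.
move: HH; congr psat; apply: functional_extensionality; case=> [[t x]|[t x]] /=.
- by rewrite /h (@hI _ _ I' (q k) (q l) Iinj).
- by rewrite /h (@hI' _ _ _ (q k) (q l) I'inj Hne).
Qed.
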